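(* Let $\mathcal D \subset \mathcal H$ be an (F)-domain and let $\mathcal A \subset \mathcal L^+(\mathcal D)$ be one of: (a) $\mathcal A = \mathcal F(\mathcal D)$; (b) a unital standard $*$-operator algebra; (c) a $*$-ideal of $\mathcal L^+(\mathcal D)$ with $\mathcal A \neq \mathcal F(\mathcal D)$. If $\Phi:\mathcal A\to\mathcal A$ is an additive bijection such that for all $A,B\in\mathcal A$, $A^+B = AB^+ = 0 \iff \Phi(A)^+\Phi(B) = \Phi(A)\Phi(B)^+ = 0$, then $\Phi$ maps rank-one operators to rank-one operators and $\Phi^{-1}$ maps rank-one operators to rank-one operators; in particular $\Phi$ restricts to an additive bijection of $\mathcal F(\mathcal D)$ onto itself preserving rank-one operators in both directions.
   Context: Let $\mathcal H$ be a complex Hilbert space, $\mathcal D$ a dense linear subspace. $\mathcal L^+(\mathcal D)$ denotes the set of linear operators $A$ defined on $\mathcal D$ with $A\mathcal D\subset\mathcal D$ and $A^*\mathcal D \subset \mathcal D$, a $*$-algebra with involution $A^+ = A^*|_{\mathcal D}$. $\mathcal D$ is an (F)-domain if it is a Fréchet space in the graph topology generated by the seminorms $\phi \mapsto \|A\phi\|$, $A \in \mathcal L^+(\mathcal D)$. $\mathcal F(\mathcal D)$ is the ideal of finite rank operators in $\mathcal L^+(\mathcal D)$. A standard ($*$-)operator algebra on $\mathcal D$ is a ($*$-)subalgebra of $\mathcal L^+(\mathcal D)$ containing $\mathcal F(\mathcal D)$; unital means it contains the identity. *)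

(* Defs.v *)
From HB Require Import structures.
From mathcomp Require Import all_boot all_order all_algebra.
From mathcomp Require Import complex reals.
From Stdlib Require Import ClassicalEpsilon.

Set Implicit Arguments.
Unset Strict Implicit.
Unset Printing Implicit Defensive.

Import Order.TTheory GRing.Theory Num.Theory.
Local Open Scope ring_scope.

Record HilbertSpace (R : realType) := {
  hcar :> lmodType R[i];
  hip : hcar -> hcar -> R[i];
  hip_linear : forall (a : R[i]) (x y z : hcar),
      hip (a *: x + y) z = a * hip x z + hip y z;
  hip_sym : forall x y : hcar, hip y x = (hip x y)^*;
  hip_ge0 : forall x : hcar, 0 <= hip x x;
  hip_eq0 : forall x : hcar, hip x x = 0 -> x = 0;
  hcomplete : forall u : nat -> hcar,
      (forall e : R[i], 0 < e -> exists N : nat, forall m n : nat,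
          (N <= m)%N -> (N <= n)%N -> sqrtC (hip (u m - u n) (u m - u n)) < e) ->
      exists x : hcar, forall e : R[i], 0 < e -> exists N : nat, forall n : nat,
          (N <= n)%N -> sqrtC (hip (u n - x) (u n - x)) < e
}.

Definition hnorm (R : realType) (H : HilbertSpace R) (x : H) : R[i] :=
  sqrtC (hip x x).

Record DenseSubspace (R : realType) (H : HilbertSpace R) := {
  dcar :> lmodType R[i];
  emb : dcar -> H;
  emb_linear : forall (a : R[i]) (x y : dcar), emb (a *: x + y) = a *: emb x + emb y;
  emb_inj : forall x y : dcar, emb x = emb y -> x = y;
  emb_dense : forall (x : H) (e : R[i]), 0 < e ->
      exists phi : dcar, hnorm (x - emb phi) < e
}.

Definition op (V : Type) := V -> V.

Section Ops.
Variables (R : realType) (H : HilbertSpace R) (D : DenseSubspace H).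

Definition ip (phi psi : D) : R[i] := hip (emb phi) (emb psi).
Definition dnorm (phi : D) : R[i] := hnorm (emb phi).

Definition op0 : op D := fun _ => 0.
Definition op1 : op D := fun x => x.
Definition opadd (A B : op D) : op D := fun x => A x + B x.
Definition opscale (a : R[i]) (A : op D) : op D := fun x => a *: A x.
Definition opmul (A B : op D) : op D := fun x => A (B x).

Definition op_linear (A : op D) : Prop :=
  forall (a : R[i]) (x y : D), A (a *: x + y) = a *: A x + A y.

(* A* D ⊂ D : every psi in D lies in the domain of the Hilbert adjoint A*
   and A* psi lies in D. *)
Definition adj_maps_D (A : op D) : Prop :=
  forall psi : D, exists eta : D, forall phi : D, ip (A phi) psi = ip phi eta.

Definition Lplus (A : op D) : Prop := op_linear A /\ adj_maps_D A.

Definition adj (A : op D) : op D := fun psi =>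
  epsilon (inhabits (0 : D)) (fun eta => forall phi : D, ip (A phi) psi = ip phi eta).

Definition finite_rank (A : op D) : Prop :=
  exists (n : nat) (v : 'I_n -> D), forall x : D,
    exists c : 'I_n -> R[i], A x = \sum_(k < n) c k *: v k.

Definition rank_one (A : op D) : Prop :=
  (exists x : D, A x <> 0) /\
  exists v : D, forall x : D, exists c : R[i], A x = c *: v.

Definition FD (A : op D) : Prop := Lplus A /\ finite_rank A.

(* (F)-domain: D is a Fréchet space in the graph topology given by the
   seminorms phi |-> ||A phi||, A in L^+(D): metrizable (generated by a
   countable subfamily of these seminorms) and (sequentially) complete. *)
Definition F_domain : Prop :=
  (exists An : nat -> op D, (forall n, Lplus (An n)) /\
     forall A, Lplus A -> exists (N : nat) (c : R[i]), forall phi : D,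
       dnorm (A phi) <= c * \sum_(k < N) dnorm (An k phi)) /\
  (forall u : nat -> D,
     (forall A, Lplus A -> forall e : R[i], 0 < e -> exists N : nat,
        forall m n : nat, (N <= m)%N -> (N <= n)%N -> dnorm (A (u m - u n)) < e) ->
     exists phi : D, forall A, Lplus A -> forall e : R[i], 0 < e ->
        exists N : nat, forall n : nat, (N <= n)%N -> dnorm (A (u n - phi)) < e).

Definition subalgebra (P : op D -> Prop) : Prop :=
  (forall A, P A -> Lplus A) /\ P op0 /\
  (forall A B, P A -> P B -> P (opadd A B)) /\
  (forall a A, P A -> P (opscale a A)) /\
  (forall A B, P A -> P B -> P (opmul A B)).

Definition star_closed (P : op D -> Prop) : Prop :=
  forall A, P A -> P (adj A).

Definition standard_star_algebra (P : op D -> Prop) : Prop :=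
  subalgebra P /\ star_closed P /\ (forall A, FD A -> P A).

Definition unital (P : op D -> Prop) : Prop := P op1.

Definition star_ideal (P : op D -> Prop) : Prop :=
  (forall A, P A -> Lplus A) /\ P op0 /\
  (forall A B, P A -> P B -> P (opadd A B)) /\
  (forall a A, P A -> P (opscale a A)) /\
  (forall A B, Lplus A -> P B -> P (opmul A B) /\ P (opmul B A)) /\
  star_closed P.

End Ops.

(* Main.v *)
Require Import Defs.
From HB Require Import structures.
From mathcomp Require Import all_boot all_order all_algebra.
From mathcomp Require Import complex reals.
From mathcomp Require Import ring.
From Stdlib Require Import ClassicalEpsilon Classical FunctionalExtensionality.
Import GRing.Theory Num.Theory.
Local Open Scope ring_scope.

Set Implicit Arguments.
Unset Strict Implicit.
Unset Printing Implicit Defensive.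

Lemma selfadd (V : zmodType) (a : V) : a = a + a -> a = 0.
Proof. by move=> h; apply: (@addrI _ a); rewrite addr0 -h. Qed.

Section Basic.
Variables (R : realType) (H : HilbertSpace R) (D : DenseSubspace H).
Implicit Types (x y z u v w : D) (A B C : op D).

Lemma emb0 : emb (0 : D) = 0.
Proof.
apply: (@selfadd (hcar H)); have := emb_linear (d:=D) 1 0 0.
by rewrite !scale1r !addr0.
Qed.

Lemma ipDZl (a : R[i]) x y z : ip (a *: x + y) z = a * ip x z + ip y z.
Proof. by rewrite /ip emb_linear hip_linear. Qed.

Lemma ip0l z : ip (0 : D) z = 0.
Proof. apply: selfadd; have := ipDZl 1 0 0 z. by rewrite scale1r addr0 mul1r. Qed.

Lemma ipZl a x z : ip (a *: x) z = a * ip x z.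
Proof. by rewrite -[a *: x]addr0 ipDZl ip0l addr0. Qed.

Lemma ipDl x y z : ip (x + y) z = ip x z + ip y z.
Proof. by rewrite -[x]scale1r ipDZl mul1r scale1r. Qed.

Lemma ipNl x z : ip (- x) z = - ip x z.
Proof. by rewrite -scaleN1r ipZl mulN1r. Qed.

Lemma ipBl x y z : ip (x - y) z = ip x z - ip y z.
Proof. by rewrite ipDl ipNl. Qed.

Lemma ip_sym x y : ip y x = (ip x y)^*.
Proof. exact: hip_sym. Qed.

Lemma ipZr a x z : ip x (a *: z) = a^* * ip x z.
Proof. by rewrite ip_sym ipZl rmorphM /= -ip_sym. Qed.

Lemma ipDr x y z : ip x (y + z) = ip x y + ip x z.
Proof. by rewrite ip_sym ipDl rmorphD /= -!ip_sym. Qed.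

Lemma ip0r x : ip x 0 = 0.
Proof. by rewrite ip_sym ip0l rmorph0. Qed.

Lemma ipNr x z : ip x (- z) = - ip x z.
Proof. by rewrite ip_sym ipNl rmorphN /= -ip_sym. Qed.

Lemma ipBr x y z : ip x (y - z) = ip x y - ip x z.
Proof. by rewrite ipDr ipNr. Qed.

Lemma ip_eq0 x : ip x x = 0 -> x = 0.
Proof.
move=> h; apply: (@emb_inj _ _ D); rewrite emb0; exact: hip_eq0.
Qed.

Lemma ipxx_neq0 x : x <> 0 -> ip x x != 0.
Proof. by move=> hx; apply/eqP => /ip_eq0. Qed.

Lemma ipxx_real x : (ip x x)^* = ip x x.
Proof. by rewrite -ip_sym. Qed.

Lemma ip_ext e1 e2 : (forall x, ip x e1 = ip x e2) -> e1 = e2.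
Proof.
move=> h; apply/eqP; rewrite -subr_eq0; apply/eqP; apply: ip_eq0.
by rewrite ipBr h subrr.
Qed.

Lemma ip_ext_l e1 e2 : (forall x, ip e1 x = ip e2 x) -> e1 = e2.
Proof. by move=> h; apply: ip_ext => x; rewrite ip_sym h -ip_sym. Qed.


Lemma adjP A : Lplus A -> forall phi psi, ip (A phi) psi = ip phi (adj A psi).
Proof.
move=> [_ hA] phi psi; rewrite /adj.
move: phi; apply: (epsilon_spec (inhabits (0:D))
  (fun eta => forall phi, ip (A phi) psi = ip phi eta) (hA psi)).
Qed.

Lemma adj_uniq A psi eta : Lplus A ->
  (forall phi, ip (A phi) psi = ip phi eta) -> adj A psi = eta.
Proof. by move=> hA h; apply: ip_ext => x; rewrite -adjP. Qed.

Definition rk u v : op D := fun x => ip x v *: u.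

Lemma rk_Lplus u v : Lplus (rk u v).
Proof.
split.
  by move=> a x y; rewrite /rk ipDZl scalerDl scalerA.
move=> y; exists (ip y u *: v) => x.
by rewrite /rk ipZl ipZr -ip_sym mulrC.
Qed.

Lemma adj_rk u v y : adj (rk u v) y = ip y u *: v.
Proof.
apply: adj_uniq; first exact: rk_Lplus.
by move=> x; rewrite /rk ipZl ipZr -ip_sym mulrC.
Qed.

Lemma rk_fr u v : finite_rank (rk u v).
Proof.
exists 1%N, (fun _ => u) => x; exists (fun _ => ip x v).
by rewrite big_ord1.
Qed.

Definition orth A B := opmul (adj A) B = @op0 _ _ D /\ opmul A (adj B) = @op0 _ _ D.

Lemma orthP A B : Lplus A -> Lplus B -> orth A B <->
  (forall x y, ip (A x) (B y) = 0) /\ (forall y z, ip (adj B y) (adj A z) = 0).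
Proof.
move=> hA hB; split.
- case=> h1 h2; split.
  + move=> x y; rewrite adjP //.
    have := congr1 (fun f => f y) h1; rewrite /opmul /op0 => ->.
    exact: ip0r.
  + move=> y z; rewrite -adjP //.
    have := congr1 (fun f => f y) h2; rewrite /opmul /op0 => ->.
    exact: ip0l.
- case=> h1 h2; split; apply: functional_extensionality => y; rewrite /opmul /op0.
  + by apply: ip_ext => x; rewrite -adjP // h1 ip0r.
  + by apply: ip_ext_l => z; rewrite adjP // h2 ip0l.
Qed.

Lemma orth_rk_suff u v C : Lplus C -> adj C u = 0 -> C v = 0 -> orth (rk u v) C.
Proof.
move=> hC h1 h2; apply/orthP => //; first exact: rk_Lplus.
split.
  move=> x y; rewrite /rk ipZl [ip u _]ip_sym (adjP hC) h1 ip0r.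
  by rewrite conjC0 mulr0.
move=> y z; rewrite adj_rk ipZr [ip (adj C y) v]ip_sym -(adjP hC) h2 ip0l.
by rewrite conjC0 mulr0.
Qed.

Lemma adj_nz A x : Lplus A -> A x <> 0 -> adj A (A x) <> 0.
Proof.
move=> hA hx h; have := ipxx_neq0 hx.
by rewrite adjP // h ip0r eqxx.
Qed.

Lemma rank_one_rk A : Lplus A -> rank_one A ->
  exists u v, u <> 0 /\ v <> 0 /\ A = rk u v.
Proof.
move=> hA [[x0 hx0] [phi hphi]].
have phi0 : phi <> 0.
  move=> e; apply: hx0; have [c ->] := hphi x0; by rewrite e scaler0.
have pp0 := ipxx_neq0 phi0.
exists ((ip phi phi)^-1 *: phi), (adj A phi); split; last split.
- by apply/eqP; rewrite scaler_eq0 negb_or invr_eq0 pp0 /=; apply/eqP.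
- move=> e; apply: hx0; have [c hc] := hphi x0.
  have := adjP hA x0 phi; rewrite e ip0r hc ipZl => /eqP.
  rewrite mulf_eq0 (negbTE pp0) orbF => /eqP ->.
  by rewrite scale0r.
- apply: functional_extensionality => x; rewrite /rk -adjP //.
  have [c ->] := hphi x; rewrite ipZl scalerA mulfK //.
Qed.

Lemma rk_rank_one u v : u <> 0 -> v <> 0 -> rank_one (rk u v).
Proof.
move=> hu hv; split.
  exists v; rewrite /rk => /eqP; rewrite scaler_eq0 (negbTE (ipxx_neq0 hv)) /=.
  by move/eqP.
by exists u => x; exists (ip x v).
Qed.

Definition proj e z := (ip z e / ip e e) *: e.

Lemma proj_orth e z : e <> 0 -> ip (z - proj e z) e = 0.
Proof.
move=> he; rewrite ipBl /proj ipZl divfK ?subrr //; exact: ipxx_neq0.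
Qed.

Lemma all_par v : v <> 0 -> (forall s, ip s v = 0 -> s = 0) ->
  forall y, y = proj v y.
Proof.
move=> hv h y; apply/eqP; rewrite -subr_eq0; apply/eqP; apply: h.
exact: proj_orth.
Qed.

Lemma par1 u v y : u <> 0 -> v <> 0 ->
  (forall w s, ip u w = 0 -> ip v s = 0 -> s <> 0 -> ip y w = 0) ->
  exists k, y = k *: u.
Proof.
move=> hu hv h.
case: (classic (exists s, s <> 0 /\ ip v s = 0)) => [[s [s0 vs]]|hn].
- set w := y - proj u y.
  have uw : ip u w = 0 by rewrite ip_sym proj_orth // conjC0.
  have yw := h w s uw vs s0.
  have ww : ip w w = 0.
    by rewrite {1}/w ipBl yw /proj ipZl uw mulr0 subrr.
  exists (ip y u / ip u u); apply/eqP; rewrite -subr_eq0; apply/eqP.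
  exact: ip_eq0.
- have hv' : forall s, ip s v = 0 -> s = 0.
    move=> s e; apply: NNPP => sn; apply: hn; exists s; split => //.
    by rewrite ip_sym e conjC0.
  have ey := all_par hv hv' y; have eu := all_par hv hv' u.
  move: ey eu; rewrite /proj; set a := _ / _; set b := _ / _ => ey eu.
  have b0 : b != 0 by apply/eqP => b0; apply: hu; rewrite eu b0 scale0r.
  exists (a / b); by rewrite eu scalerA divfK.
Qed.


Section Char.
Variable P : op D -> Prop.
Hypothesis hPL : forall A, P A -> Lplus A.
Hypothesis hPrk : forall u v, P (rk u v).

Definition nz A := exists x, A x <> 0.

Definition Char A := nz A /\ forall B, P B -> nz B ->
  (forall C, P C -> orth A C -> orth B C) -> forall C, P C -> orth B C -> orth A C.

Lemma R1 A : P A -> rank_one A -> forall B, P B -> nz B ->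
  (forall C, P C -> orth A C -> orth B C) -> forall C, P C -> orth B C -> orth A C.
Proof.
move=> PA r1 B PB [x0 hx0] hN.
have [u [v [hu [hv eA]]]] := rank_one_rk (hPL PA) r1; subst A.
have LB := hPL PB.
have [k1 e1] : exists k, B x0 = k *: u.
  apply: (par1 hu hv) => w s uw vs s0.
  have o : orth (rk u v) (rk w s).
    apply: orth_rk_suff; first exact: rk_Lplus.
      by rewrite adj_rk uw scale0r.
    by rewrite /rk vs scale0r.
  have [h1 _] := (orthP LB (rk_Lplus _ _)).1 (hN _ (hPrk _ _) o).
  have := h1 x0 s; rewrite /rk ipZr => /eqP; rewrite mulf_eq0 conjC_eq0.
  by rewrite (negbTE (ipxx_neq0 s0)) /= => /eqP.
have k10 : k1 != 0 by apply/eqP => k0; apply: hx0; rewrite e1 k0 scale0r.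
have [k2 e2] : exists k, adj B (B x0) = k *: v.
  apply: (par1 hv hu) => w s vw us s0.
  have o : orth (rk u v) (rk s w).
    apply: orth_rk_suff; first exact: rk_Lplus.
      by rewrite adj_rk us scale0r.
    by rewrite /rk vw scale0r.
  have [_ h2] := (orthP LB (rk_Lplus _ _)).1 (hN _ (hPrk _ _) o).
  have := h2 s (B x0); rewrite adj_rk ipZl => /eqP; rewrite mulf_eq0.
  rewrite (negbTE (ipxx_neq0 s0)) /= => /eqP e.
  by rewrite ip_sym e conjC0.
have k20 : k2 != 0.
  apply/eqP => k0; apply: (adj_nz LB hx0); by rewrite e2 k0 scale0r.
move=> C PC oBC; have LC := hPL PC.
have [h1 h2] := (orthP LB LC).1 oBC.
apply: orth_rk_suff => //.
  apply: ip_ext => x; rewrite -(adjP LC) ip0r.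
  have := h1 x0 x; rewrite e1 ipZl => /eqP; rewrite mulf_eq0 (negbTE k10) /=.
  by move=> /eqP e; rewrite ip_sym e conjC0.
apply: ip_ext_l => y; rewrite (adjP LC) ip0l.
have := h2 y (B x0); rewrite e2 ipZr => /eqP; rewrite mulf_eq0 conjC_eq0 (negbTE k20) /=.
by move=> /eqP e; rewrite ip_sym e conjC0.
Qed.

Lemma R2 A : P A -> nz A -> ~ rank_one A -> exists B, P B /\ nz B /\
  (forall C, P C -> orth A C -> orth B C) /\
  exists C, P C /\ orth B C /\ ~ orth A C.
Proof.
move=> PA [x0 hx0] nr1; have LA := hPL PA.
set a := A x0; set b := adj A a.
have b0 : b <> 0 by apply: adj_nz.
exists (rk a b); split; first exact: hPrk.
split.
  exists b; rewrite /rk => /eqP; rewrite scaler_eq0 (negbTE (ipxx_neq0 b0)) /=.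
  by move/eqP.
split.
  move=> C PC oAC; have LC := hPL PC.
  have [h1 h2] := (orthP LA LC).1 oAC.
  apply: orth_rk_suff => //.
    apply: ip_ext => x; rewrite -(adjP LC) ip0r.
    by rewrite ip_sym h1 conjC0.
  apply: ip_ext_l => y; rewrite (adjP LC) ip0l.
  by rewrite ip_sym h2 conjC0.
have [w hw] : exists w, A w <> proj a (A w).
  apply: NNPP => hn; apply: nr1; split; first by exists x0.
  exists a => x; exists (ip (A x) a / ip a a).
  by apply: NNPP => hne; apply: hn; exists x.
set g := A w - proj a (A w).
have g0 : g <> 0.
  by move=> e; apply: hw; apply/eqP; rewrite -subr_eq0; apply/eqP.
have ga : ip g a = 0 by apply: proj_orth.
have Awg : ip (A w) g = ip g g.
  rewrite {2}/g ipBl /proj ipZl [ip a g]ip_sym ga conjC0 mulr0 subr0 //.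
have [s [s0 sb]] : exists s, s <> 0 /\ ip s b = 0.
  apply: NNPP => hn.
  have hv' : forall s, ip s b = 0 -> s = 0.
    by move=> s e; apply: NNPP => sn; apply: hn; exists s.
  have ea := all_par b0 hv' a; have eg := all_par b0 hv' g.
  move: ea eg; rewrite /proj; generalize (ip a b / ip b b) (ip g b / ip b b) => al gm ea eg.
  have := ga; rewrite eg ea ipZl ipZr => /eqP.
  rewrite !mulf_eq0 conjC_eq0 (negbTE (ipxx_neq0 b0)) orbF.
  case/orP => /eqP e0.
    by apply: g0; rewrite eg e0 scale0r.
  have a0 : a <> 0 by [].
  by apply: a0; rewrite ea e0 scale0r.
exists (rk g s); split; first exact: hPrk.
split.
  apply: orth_rk_suff; first exact: rk_Lplus.
    by rewrite adj_rk ip_sym ga conjC0 scale0r.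
  by rewrite /rk ip_sym sb conjC0 scale0r.
move=> oAC; have [h1 _] := (orthP LA (rk_Lplus _ _)).1 oAC.
have := h1 w s; rewrite /rk ipZr Awg => /eqP.
rewrite mulf_eq0 conjC_eq0 (negbTE (ipxx_neq0 s0)) /=.
exact/negP/ipxx_neq0.
Qed.

Lemma rank_one_char A : P A -> (rank_one A <-> Char A).
Proof.
move=> PA; split.
  move=> r1; split; first by case: r1.
  exact: R1.
case=> nA hC; apply: NNPP => nr1.
have [B [PB [nB [hN [C [PC [oBC noAC]]]]]]] := R2 PA nA nr1.
exact: noAC (hC B PB nB hN C PC oBC).
Qed.

End Char.

Lemma lin0 A : op_linear A -> A 0 = 0.
Proof.
move=> hA; apply: selfadd; have := hA 1 0 0.
by rewrite !scale1r !addr0.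
Qed.

Lemma linZ A a x : op_linear A -> A (a *: x) = a *: A x.
Proof. by move=> hA; rewrite -[a *: x]addr0 hA lin0 // addr0. Qed.

Lemma linD A x y : op_linear A -> A (x + y) = A x + A y.
Proof. by move=> hA; have := hA 1 x y; rewrite !scale1r. Qed.

Lemma Lplus0 : Lplus (@op0 _ _ D).
Proof.
split; first by move=> a x y; rewrite /op0 scaler0 addr0.
by move=> psi; exists 0 => phi; rewrite /op0 ip0l ip0r.
Qed.

Lemma Lplus_add A B : Lplus A -> Lplus B -> Lplus (opadd A B).
Proof.
move=> hA hB; split.
  move=> a x y; rewrite /opadd (hA.1) (hB.1) scalerDr.
  by rewrite -!addrA; congr (_ + _); rewrite addrCA.
move=> psi; exists (adj A psi + adj B psi) => phi.
by rewrite /opadd ipDl ipDr !adjP.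
Qed.

Lemma fr0 : finite_rank (@op0 _ _ D).
Proof. by exists 0%N, (fun _ => 0) => x; exists (fun _ => 0); rewrite big_ord0. Qed.

Definition r1 B := exists v, forall x : D, exists c, B x = c *: v.

Lemma r1_rk u v : r1 (rk u v).
Proof. by exists u => x; exists (ip x v). Qed.

Lemma r1_0 : r1 (@op0 _ _ D).
Proof. by exists 0 => x; exists 0; rewrite scale0r. Qed.

Lemma fr_cons A B : finite_rank A -> r1 B -> finite_rank (opadd B A).
Proof.
move=> [n [vs hA]] [v hB].
exists n.+1, (fun k => if unlift ord0 k is Some j then vs j else v) => x.
have [c hc] := hA x; have [d hd] := hB x.
exists (fun k => if unlift ord0 k is Some j then c j else d).
rewrite big_ord_recl /= unlift_none.
under eq_bigr do rewrite liftK.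
by rewrite /opadd hd hc.
Qed.

Definition sumrk (s : seq (D * D)) : op D := fun x => \sum_(p <- s) ip x p.2 *: p.1.

Lemma sumrk_nil : sumrk [::] = @op0 _ _ D.
Proof. by apply: functional_extensionality => x; rewrite /sumrk big_nil. Qed.

Lemma sumrk_cons p s : sumrk (p :: s) = opadd (rk p.1 p.2) (sumrk s).
Proof. by apply: functional_extensionality => x; rewrite /sumrk big_cons. Qed.

Lemma proj_lin e a x y : proj e (a *: x + y) = a *: proj e x + proj e y.
Proof. by rewrite /proj ipDZl mulrDl scalerDl scalerA mulrA. Qed.

Definition Qp e z := z - proj e z.

Lemma Qp_sum e n (c : 'I_n -> R[i]) (vs : 'I_n -> D) :
  Qp e (\sum_(k < n) c k *: vs k) = \sum_(k < n) c k *: Qp e (vs k).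
Proof.
elim/big_rec2: _ => [|k y1 y2 _ <-]; first by rewrite /Qp /proj ip0l mul0r scale0r subr0.
rewrite /Qp; have -> := proj_lin e (c k) (vs k) y2; rewrite scalerBr.
by rewrite opprD addrACA.
Qed.

Lemma decomp n (vs : 'I_n -> D) A : Lplus A ->
  (forall x, exists c : 'I_n -> R[i], A x = \sum_(k < n) c k *: vs k) ->
  exists s, A = sumrk s.
Proof.
elim: n vs A => [|n IH] vs A LA hA.
  exists [::]; rewrite sumrk_nil; apply: functional_extensionality => x.
  by have [c ->] := hA x; rewrite big_ord0.
set e := vs ord0.
case: (classic (e = 0)) => [e0|e0].
  apply: (IH (fun k => vs (lift ord0 k))) => // x.
  have [c ->] := hA x; exists (fun k => c (lift ord0 k)).
  by rewrite big_ord_recl -/e e0 scaler0 add0r.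
have ee0 := ipxx_neq0 e0.
set A' := fun x => Qp e (A x).
have LA' : Lplus A'.
  split.
    move=> a x y; rewrite /A' /Qp LA.1 proj_lin scalerBr opprD addrACA //.
  move=> y; exists (adj A y - ((ip e y / ip e e)^*) *: adj A e) => x.
  rewrite /A' /Qp ipBl ipBr ipZr conjCK !(adjP LA) /proj ipZl (adjP LA).
  by congr (_ - _); ring.
have [s es] : exists s, A' = sumrk s.
  apply: (IH (fun k => Qp e (vs (lift ord0 k)))) => // x.
  have [c hc] := hA x; exists (fun k => c (lift ord0 k)).
  rewrite /A' hc Qp_sum big_ord_recl -/e.
  have -> : Qp e e = 0 by rewrite /Qp /proj divff // scale1r subrr.
  by rewrite scaler0 add0r.
exists (((ip e e)^-1 *: e, adj A e) :: s).
rewrite sumrk_cons -es; apply: functional_extensionality => x.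
rewrite /opadd /rk /A' /Qp /= /proj -(adjP LA) scalerA.
by rewrite addrC subrK.
Qed.

Lemma FD_decomp A : FD A -> exists s, A = sumrk s.
Proof. by case=> LA [n [vs h]]; exact: (decomp LA h). Qed.

End Basic.

Lemma nzP (R : realType) (H : HilbertSpace R) (D : DenseSubspace H) (A : op D) :
  nz A <-> A <> @op0 _ _ D.
Proof.
split.
  by move=> [x hx] e; apply: hx; rewrite e.
move=> hA; apply: NNPP => hn; apply: hA; apply: functional_extensionality => x.
by apply: NNPP => hx; apply: hn; exists x.
Qed.

Theorem mainTheorem4 (R : realType) (H : HilbertSpace R) (D : DenseSubspace H)
    (P : op D -> Prop) (Phi : op D -> op D) :
  F_domain D ->
  ((forall A, P A <-> FD A) \/
   (standard_star_algebra P /\ unital P) \/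
   (star_ideal P /\ ~ (forall A, P A <-> FD A))) ->
  (* Phi is an additive bijection of P onto itself *)
  (forall A, P A -> P (Phi A)) ->
  (forall A B, P A -> P B -> Phi A = Phi B -> A = B) ->
  (forall B, P B -> exists A, P A /\ Phi A = B) ->
  (forall A B, P A -> P B -> Phi (opadd A B) = opadd (Phi A) (Phi B)) ->
  (* preservation of zero products in both directions *)
  (forall A B, P A -> P B ->
     (opmul (adj A) B = @op0 _ _ D /\ opmul A (adj B) = @op0 _ _ D <->
      opmul (adj (Phi A)) (Phi B) = @op0 _ _ D /\ opmul (Phi A) (adj (Phi B)) = @op0 _ _ D)) ->
  forall A, P A ->
    (rank_one A <-> rank_one (Phi A)) /\ (FD A <-> FD (Phi A)).
Proof.
move=> _ hcase hPP hinj hsurj hadd horth.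
have hPL : forall A, P A -> Lplus A.
  case: hcase => [h|[[[hs _] _]|[hs _]]] A PA.
  - exact: ((h A).1 PA).1.
  - exact: hs.1.
  - exact: hs.1.
have hP0 : P (@op0 _ _ D).
  case: hcase => [h|[[[hs _] _]|[hs _]]].
  - by apply/h; split; [exact: Lplus0 | exact: fr0].
  - exact: hs.2.1.
  - exact: hs.2.1.
have hPadd1 : forall A B, P A -> P B -> r1 B -> P (opadd B A).
  move=> A B PA PB rB.
  case: hcase => [h|[[[hs _] _]|[hs _]]].
  - apply/h; split; first exact: Lplus_add (hPL _ PB) (hPL _ PA).
    exact: fr_cons ((h A).1 PA).2 rB.
  - exact: hs.2.2.1.
  - exact: hs.2.2.1.
have Phi0 : Phi (@op0 _ _ D) = @op0 _ _ D.
  have e : opadd (@op0 _ _ D) (@op0 _ _ D) = @op0 _ _ D.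
    by apply: functional_extensionality => x; rewrite /opadd /op0 addr0.
  have := hadd _ _ hP0 hP0; rewrite e => h.
  apply: functional_extensionality => x.
  have := congr1 (fun f => f x) h; rewrite /opadd => /selfadd ->.
  by [].
have hnzPhi : forall A, P A -> (nz A <-> nz (Phi A)).
  move=> A PA; rewrite !nzP; split.
    by move=> hA e; apply: hA; apply: hinj => //; rewrite Phi0.
  by move=> hA e; apply: hA; rewrite e Phi0.
case: (classic (exists A0, P A0 /\ nz A0)) => [[A0 [PA0 [x0 hx0]]]|hn]; last first.
  have hz : forall A, P A -> A = @op0 _ _ D.
    move=> A PA; apply: NNPP => hA; apply: hn; exists A; split => //.
    exact/nzP.
  move=> A PA; rewrite (hz _ (hPP _ PA)) (hz _ PA); by split.
have hPrk : forall u v, P (rk u v).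
  move=> u v.
  case: hcase => [h|[[[hs [_ hFD]] _]|[hs _]]].
  - by apply/h; split; [exact: rk_Lplus | exact: rk_fr].
  - by apply: hFD; split; [exact: rk_Lplus | exact: rk_fr].
  - set a := A0 x0.
    have aa : ip a a != 0 by exact: ipxx_neq0.
    have LA0 := hPL _ PA0.
    have hI := hs.2.2.2.2.1.
    have P1 : P (opmul A0 (rk x0 v)) := (hI _ _ (rk_Lplus x0 v) PA0).2.
    have P2 : P (opmul (rk u a) (opmul A0 (rk x0 v))) := (hI _ _ (rk_Lplus u a) P1).1.
    have P3 := hs.2.2.2.1 ((ip a a)^-1) _ P2.
    suff -> : rk u v = opscale (ip a a)^-1 (opmul (rk u a) (opmul A0 (rk x0 v))) by [].
    apply: functional_extensionality => x.
    rewrite /opscale /opmul /rk (linZ (ip x v) x0 LA0.1).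
    by rewrite -/a ipZl scalerA mulrC -mulrA divff // mulr1.
have hCh : forall A, P A -> Char P A -> Char P (Phi A).
  move=> A PA [nA hC]; split; first exact/(hnzPhi _ PA).
  move=> B' PB' nB' hN C' PC' oBC'.
  have [B [PB eB]] := hsurj B' PB'; subst B'.
  have [C [PC eC]] := hsurj C' PC'; subst C'.
  apply: (horth _ _ PA PC).1.
  apply: (hC B PB _ _ C PC ((horth _ _ PB PC).2 oBC')).
    exact/(hnzPhi _ PB).
  move=> E PE oAE; apply: (horth _ _ PB PE).2.
  exact: hN _ (hPP _ PE) ((horth _ _ PA PE).1 oAE).
have hCh' : forall A, P A -> Char P (Phi A) -> Char P A.
  move=> A PA [nA hC]; split; first exact/(hnzPhi _ PA).
  move=> B PB nB hN C PC oBC.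
  apply: (horth _ _ PA PC).2.
  apply: (hC (Phi B) (hPP _ PB) _ _ (Phi C) (hPP _ PC) ((horth _ _ PB PC).1 oBC)).
    exact/(hnzPhi _ PB).
  move=> C' PC' oAC'.
  have [E [PE eE]] := hsurj C' PC'; subst C'.
  apply: (horth _ _ PB PE).1; apply: (hN _ PE).
  exact: (horth _ _ PA PE).2 oAC'.
have hR1 : forall A, P A -> (rank_one A <-> rank_one (Phi A)).
  move=> A PA; rewrite (rank_one_char hPL hPrk PA) (rank_one_char hPL hPrk (hPP _ PA)).
  by split; [exact: hCh | exact: hCh'].
have hr1 : forall B, P B -> r1 B -> r1 (Phi B).
  move=> B PB rB; case: (classic (nz B)) => nB.
    by have [] := (hR1 _ PB).1 (conj nB rB).
  have -> : B = @op0 _ _ D by apply: NNPP => e; apply: nB; exact/nzP.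
  by rewrite Phi0; exact: r1_0.
have hr1' : forall B, P B -> r1 (Phi B) -> r1 B.
  move=> B PB rB; case: (classic (nz (Phi B))) => nB.
    by have [] := (hR1 _ PB).2 (conj nB rB).
  have -> : B = @op0 _ _ D.
    by apply: NNPP => e; apply: nB; apply/(hnzPhi _ PB); exact/nzP.
  exact: r1_0.
move=> A PA; split; first exact: hR1.
split.
- move=> FA; have [s es] := FD_decomp FA.
  have key : forall s, P (sumrk s) /\ finite_rank (Phi (sumrk s)).
    elim=> [|p s' [IH1 IH2]].
      by rewrite sumrk_nil Phi0; split; [exact: hP0 | exact: fr0].
    rewrite sumrk_cons; split.
      by apply: hPadd1 => //; exact: r1_rk.
    rewrite hadd //; apply: fr_cons IH2 _.
    by apply: hr1 => //; exact: r1_rk.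
  split; first exact: hPL (hPP _ PA).
  by rewrite es; exact: (key s).2.
- move=> FA; have [s es] := FD_decomp FA.
  have key : forall s, exists S, P S /\ Phi S = sumrk s /\ finite_rank S.
    elim=> [|p s' [S' [PS' [eS' fS']]]].
      by exists (@op0 _ _ D); rewrite sumrk_nil Phi0; split => //; split => //; exact: fr0.
    have [S1 [PS1 eS1]] := hsurj _ (hPrk p.1 p.2).
    have rS1 : r1 S1 by apply: hr1' => //; rewrite eS1; exact: r1_rk.
    exists (opadd S1 S'); split; first exact: hPadd1.
    split; first by rewrite hadd // eS1 eS' sumrk_cons.
    exact: fr_cons.
  have [S [PS [eS fS]]] := key s.
  have -> : A = S by apply: hinj => //; rewrite eS es.
  by split; [exact: hPL | exact: fS].
Qed.
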